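(* There exists a dynamical system $(X,T)$ which is totally transitive and transitive compact but not weakly mixing.
   Context: A dynamical system $(X,T)$: $X$ is a compact metric space with more than one point and without isolated points, $T:X\to X$ a continuous surjection. ''Opene'' means open and nonempty. $N_T(U,V)=\{n\in\mathbb{Z}_+:U\cap T^{-n}V\neq\varnothing\}$. $(X,T)$ is transitive if $N_T(U,V)\ne\varnothing$ for all opene $U,V$; totally transitive if $(X,T^k)$ is transitive for every $k\in\mathbb{N}$; weakly mixing if $(X\times X,T\times T)$ is transitive. $\mathcal{N}_T$ is the family of all subsets of $\mathbb{Z}_+$ containing some $N_T(U,V)$ with $U,V$ opene; $\omega_{\mathcal{N}_T}(x)=\bigcap_{F\in\mathcal{N}_T}\overline{\{T^ix:i\in F\}}$. $(X,T)$ is transitive compact if $\omega_{\mathcal{N}_T}(x)\neq\varnothing$ for all $x\in X$. *)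

(* Defs.v *)
From mathcomp Require Import all_boot all_order all_algebra.
From mathcomp Require Import all_classical all_reals all_analysis.
From mathcomp Require Export Rstruct Rstruct_topology.
Set Implicit Arguments. Unset Strict Implicit. Unset Printing Implicit Defensive.
Local Open Scope classical_set_scope.

Section Dyn.
Variable X : topologicalType.

Definition opene (U : set X) : Prop := open U /\ U !=set0.

Definition hitting_times (T : X -> X) (U V : set X) : set nat :=
  [set n | U `&` ((iter n T) @^-1` V) !=set0].

Definition transitive_sys (T : X -> X) : Prop :=
  forall U V, opene U -> opene V -> hitting_times T U V !=set0.

Definition totally_transitive (T : X -> X) : Prop :=
  forall k : nat, (0 < k)%N -> transitive_sys (iter k T).

Definition hitting_family (T : X -> X) (F : set nat) : Prop :=
  exists U V, [/\ opene U, opene V & hitting_times T U V `<=` F].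

Definition omega_family (T : X -> X) (x : X) : set X :=
  [set y | forall F, hitting_family T F ->
             closure [set iter i T x | i in F] y].

Definition transitive_compact (T : X -> X) : Prop :=
  forall x, omega_family T x !=set0.

Definition dynamical_system (T : X -> X) : Prop :=
  [/\ compact [set: X], hausdorff_space X,
      (exists x y : X, x <> y),
      (forall x : X, ~ open [set x]) &
      (continuous T /\ (forall y, exists x, T x = y))].
End Dyn.

Definition weakly_mixing (X : topologicalType) (T : X -> X) : Prop :=
  @transitive_sys (X * X)%type (fun p => (T p.1, T p.2)).

(* Main.v *)
Require Import Defs.
From mathcomp Require Import all_boot all_order all_algebra.
From mathcomp Require Import all_classical all_reals all_analysis.
From mathcomp Require Import Rstruct Rstruct_topology.
From mathcomp Require Import zify ring lra.
From Stdlib Require FunctionalExtensionality.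
Set Implicit Arguments. Unset Strict Implicit. Unset Printing Implicit Defensive.
Import Order.TTheory GRing.Theory Num.Theory.
Notation R := Rdefinitions.R.

(* Example: a cone over (irrational rotation x sparse subshift), embedded in
   (R*R)^nat.  Points pp t z n = if z n then (cos t, sin t) else 0. *)
Definition cnt (z : nat -> bool) (i m : nat) : nat := \sum_(i <= t < i + m) z t.
Definition Zs (z : nat -> bool) : Prop := forall i m, (cnt z i m) ^ 2 <= m.

Lemma cnt0 z i : cnt z i 0 = 0.
Proof. by rewrite /cnt addn0 big_geq. Qed.

Lemma cnt_split z i a b : cnt z i (a + b) = cnt z i a + cnt z (i + a) b.
Proof.
rewrite /cnt addnA (@big_cat_nat _ _ _ (i + a)) //; lia.
Qed.

Lemma cnt_shift z k i m : cnt (fun t => z (t + k)) i m = cnt z (i + k) m.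
Proof.
rewrite /cnt -{2}[i + k]add0n big_addn.
have -> : i + k + m - k = i + m by lia.
apply: eq_big_nat => t _ /=. congr (z _); lia.
Qed.

Lemma cnt1 z i : cnt z i 1 = z i.
Proof. by rewrite /cnt addn1 big_nat1. Qed.

Lemma cnt_le z i m : cnt z i m <= m.
Proof.
elim: m => [|m IH]; first by rewrite cnt0.
rewrite -addn1 cnt_split cnt1.
by case: (z _); lia.
Qed.

Lemma cnt_mono (u v : nat -> bool) i m :
  (forall t, i <= t < i + m -> u t -> v t) -> cnt u i m <= cnt v i m.
Proof.
move=> H; rewrite /cnt big_nat_cond [X in _ <= X]big_nat_cond.
apply: leq_sum => t /andP [Ht _].
by case E: (u t) (H t Ht) => //= ->.
Qed.

Lemma cnt_zero z i m : (forall t, i <= t < i + m -> z t = false) -> cnt z i m = 0.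
Proof.
move=> H; rewrite /cnt big_nat_cond big1 // => t /andP [Ht _].
by rewrite H.
Qed.

Lemma Zs_shift z k : Zs z -> Zs (fun t => z (t + k)).
Proof. by move=> Hz i m; rewrite cnt_shift. Qed.

Definition cons0 (z : nat -> bool) : nat -> bool :=
  fun t => if t is t'.+1 then z t' else false.

Lemma shift_cons0 z : (fun t => cons0 z (t + 1)) = z.
Proof. by apply: FunctionalExtensionality.functional_extensionality => t; rewrite addn1. Qed.

Lemma Zs_cons0 z : Zs z -> Zs (cons0 z).
Proof.
move=> Hz [|i] m.
- case: m => [|m]; first by rewrite cnt0.
  rewrite -add1n cnt_split cnt1 /= add0n.
  have := cnt_shift (cons0 z) 1 0 m; rewrite shift_cons0 /cnt => <-.
  have := Hz 0 m; rewrite /cnt; lia.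
- have := cnt_shift (cons0 z) 1 i m; rewrite shift_cons0 addn1 => <-.
  exact: Hz.
Qed.

Lemma Zs_false : Zs (fun _ => false).
Proof. by move=> i m; rewrite cnt_zero. Qed.

Definition e1 (t : nat) : bool := t == 0.

Lemma cnt_e1 i m : cnt e1 i m <= 1.
Proof.
case: i => [|i].
- case: m => [|m]; first by rewrite cnt0.
  rewrite -add1n cnt_split cnt1 cnt_zero // => t; rewrite /e1; lia.
- by rewrite cnt_zero // => t; rewrite /e1; lia.
Qed.

Lemma Zs_e1 : Zs e1.
Proof.
move=> i m; have := cnt_e1 i m; have := cnt_le e1 i m.
case: (cnt e1 i m) => [|[|]] //=; lia.
Qed.

Lemma cnt_prefix_le z i m k : cnt z i m <= cnt z i (m + k).
Proof. by rewrite cnt_split leq_addr. Qed.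

Lemma cnt_sub0 z i m : cnt z i m <= cnt z 0 (i + m).
Proof. by rewrite cnt_split add0n leq_addl. Qed.

Definition trunc (L : nat) (u : nat -> bool) : nat -> bool := fun t => (t < L) && u t.
Definition pre (n : nat) (w : nat -> bool) : nat -> bool := fun t => (n <= t) && w (t - n).

Lemma cnt_trunc_L L u i m : cnt (trunc L u) i m <= cnt u 0 L.
Proof.
apply: leq_trans (cnt_sub0 _ _ _) _.
have H : cnt (trunc L u) 0 L <= cnt u 0 L.
  by apply: cnt_mono => t _; rewrite /trunc => /andP [].
case: (leqP (i + m) L) => h.
- apply: leq_trans H; have -> : L = (i + m) + (L - (i + m)) by lia.
  exact: cnt_prefix_le.
- have -> : i + m = L + (i + m - L) by lia.
  rewrite cnt_split add0n (@cnt_zero _ L) ?addn0 // => t ht.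
  by rewrite /trunc; apply/negbTE; rewrite negb_and -leqNgt; case/andP: ht => ->.
Qed.

Lemma cnt_trunc_le L u i m : cnt (trunc L u) i m <= cnt u i m.
Proof. by apply: cnt_mono => t _ /andP []. Qed.

Lemma cnt_trunc_0 L u i m : L <= i -> cnt (trunc L u) i m = 0.
Proof.
move=> h; apply: cnt_zero => t /andP [h1 _]; rewrite /trunc.
by apply/negbTE; rewrite negb_and -leqNgt (leq_trans h h1).
Qed.

Lemma cnt_pre_ge n w i m : cnt (pre n w) (i + n) m = cnt w i m.
Proof.
rewrite -cnt_shift /cnt; apply: eq_big_nat => t _.
by rewrite /pre leq_addl addnK.
Qed.

Lemma pre_lt n w t : t < n -> pre n w t = false.
Proof. by rewrite /pre ltnNge => /negbTE ->. Qed.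

Lemma cnt_pre_dom n w i m : exists j, cnt (pre n w) i m <= cnt w j m.
Proof.
case: (leqP n i) => h.
- by exists (i - n); rewrite -(cnt_pre_ge n w (i - n)) subnK.
- exists 0; case: (leqP (i + m) n) => h2.
  + by rewrite cnt_zero // => t ht; rewrite pre_lt //; lia.
  + apply: leq_trans (cnt_sub0 _ _ _) _.
    have -> : i + m = n + (i + m - n) by lia.
    rewrite cnt_split (@cnt_zero _ 0 n); last first.
      by move=> t ht; rewrite pre_lt //; lia.
    rewrite add0n -(add0n n) cnt_pre_ge.
    apply: leq_trans (cnt_prefix_le _ _ _ (n - i)) _.
    by rewrite (_ : i + m - n + (n - i) = m) //; lia.
Qed.

Lemma cnt_pre_0 n w i m : i + m <= n -> cnt (pre n w) i m = 0.
Proof.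
by move=> h; rewrite cnt_zero // => t ht; rewrite pre_lt //; lia.
Qed.

Definition glue (u : nat -> bool) (L n : nat) (v : nat -> bool) : nat -> bool :=
  fun t => if t < L then u t else if (n <= t) && (t < n + L) then v (t - n) else false.

Lemma glue_l u L n v t : t < L -> glue u L n v t = u t.
Proof. by rewrite /glue => ->. Qed.

Lemma glue_r u L n v t : L <= n -> t < L -> glue u L n v (t + n) = v t.
Proof.
move=> h1 h2; rewrite /glue ifF; last by apply/negbTE; rewrite -leqNgt; lia.
by rewrite ifT ?addnK //; apply/andP; split; lia.
Qed.

Lemma cnt_add (g a b : nat -> bool) i m :
  (forall t, (g t : nat) = a t + b t) -> cnt g i m = cnt a i m + cnt b i m.
Proof. by move=> H; rewrite /cnt -big_split /=; apply: eq_bigr => t _; rewrite H. Qed.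

Lemma Zs_glue u v L n : Zs u -> Zs v -> 5 * L <= n -> Zs (glue u L n v).
Proof.
move=> Hu Hv hn i m.
have Hg : forall t, (glue u L n v t : nat) = trunc L u t + pre n (trunc L v) t.
  move=> t; rewrite /glue /trunc /pre.
  have [h1|h1] := ltnP t L.
  - have -> : (n <= t) = false by apply/negbTE; rewrite -ltnNge; lia.
    by rewrite /= addn0.
  - have [h2|h2] := leqP n t; rewrite /=.
    + have [h3|h3] := ltnP t (n + L); rewrite /=.
      * by have -> : t - n < L by lia.
      * by have -> : (t - n < L) = false by apply/negbTE; rewrite -leqNgt; lia.
    + by [].
rewrite (cnt_add _ _ Hg).
set x := cnt (trunc L u) i m; set y := cnt (pre n (trunc L v)) i m.
have hx1 : x ^ 2 <= m by apply: leq_trans (Hu i m); rewrite leq_exp2r // cnt_trunc_le.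
have hx2 : x ^ 2 <= L by apply: leq_trans (Hu 0 L); rewrite leq_exp2r // cnt_trunc_L.
have [j hj] := cnt_pre_dom n (trunc L v) i m.
have hy1 : y ^ 2 <= m.
  apply: leq_trans (Hv j m); rewrite leq_exp2r //; apply: leq_trans hj _; exact: cnt_trunc_le.
have hy2 : y ^ 2 <= L.
  apply: leq_trans (Hv 0 L); rewrite leq_exp2r //; apply: leq_trans hj _; exact: cnt_trunc_L.
case: (leqP L i) => h1.
  by rewrite /x cnt_trunc_0 // add0n.
case: (leqP (i + m) n) => h2.
  by rewrite /y cnt_pre_0 // addn0.
have hm : 4 * L < m by lia.
have : (x + y) ^ 2 <= 2 * x ^ 2 + 2 * y ^ 2.
  rewrite !expnS !expn0 !muln1.
  have [h|h] := leqP x y.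
  - have -> : y = x + (y - x) by lia. nia.
  - have -> : x = y + (x - y) by lia. nia.
move=> h; apply: (leq_trans h); apply: ltnW; apply: leq_ltn_trans hm.
have : 2 * x ^ 2 <= 2 * L by rewrite leq_mul2l hx2 orbT.
have : 2 * y ^ 2 <= 2 * L by rewrite leq_mul2l hy2 orbT.
lia.
Qed.

Lemma cnt_ge1 (z : nat -> bool) s L t : t < L -> z (s + t) -> 1 <= cnt z s L.
Proof.
move=> ht hz; have -> : L = t + 1 + (L - t - 1) by lia.
rewrite cnt_split cnt_split cnt1 hz; lia.
Qed.

Lemma cnt_blocks (z : nat -> bool) M L K :
  (forall j, j < K -> exists2 t, t < L & z (M + j * L + t)) -> K <= cnt z M (K * L).
Proof.
elim: K => [|K IH] H; first by [].
rewrite mulSnr cnt_split.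
have [t ht hz] := H K (ltnSn K).
have := cnt_ge1 ht hz.
have := IH (fun j hj => H j (ltnW hj)); lia.
Qed.

Lemma Zs_zeroblock z L M : Zs z ->
  exists s, M <= s /\ forall t, t < L -> z (s + t) = false.
Proof.
move=> Hz.
case E: [exists j : 'I_(L.+1), all (fun t => ~~ z (M + j * L + t)) (iota 0 L)].
- move/existsP: E => [j /allP hj]; exists (M + j * L); split; first by rewrite leq_addr.
  by move=> t ht; apply/negbTE; apply: hj; rewrite mem_iota add0n.
- have H : forall j, j < L.+1 -> exists2 t, t < L & z (M + j * L + t).
    move=> j hj; move/negbT: E; rewrite negb_exists => /forallP /(_ (Ordinal hj)) /=.
    move/allPn => [t]; rewrite mem_iota add0n /= negbK => ht hz; by exists t.
  have := cnt_blocks H; have := Hz M (L.+1 * L).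
  move=> h1 h2; have : L.+1 ^ 2 <= L.+1 * L.
    apply: leq_trans h1; rewrite leq_exp2r //.
  rewrite expnS expn1 leq_mul2l /=; lia.
Qed.
Local Open Scope ring_scope.
Definition tau : R := 2 * pi.

Lemma tau_gt0 : 0 < tau.
Proof. by rewrite /tau mulr_gt0 // pi_gt0. Qed.

Lemma irr (n : nat) (m : int) : (0 < n)%N -> n%:R != m%:~R * tau.
Proof.
move=> n0; apply/eqP => E.
have mpos : 0 < m.
  rewrite ltNge; apply/negP => m0.
  have : (n%:R : R) <= 0.
    have hm : m%:~R <= (0 : R) by rewrite -(ler_int R) /= in m0 *.
    rewrite E /tau; have := pi_gt0 R; nra.
  by rewrite leNgt ltr0n n0.
apply: (@pi_irrationnal R); apply/rationalP.
exists (Posz n), (2 * `|m|)%N.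
have -> : ((2 * `|m|)%N%:R : R) = 2 * m%:~R.
  by rewrite natrM -[m in RHS]gez0_abs ?ltW //.
rewrite -[(Posz n)%:~R]/(n%:R : R) E /tau; field.
by rewrite intr_eq0; apply/eqP => h; move: mpos; rewrite h.
Qed.

Definition fl (x : R) : int := Num.floor (x / tau).
Definition fr (x : R) : R := x / tau - (fl x)%:~R.

Lemma fr_ge0 x : 0 <= fr x.
Proof. by rewrite /fr subr_ge0 floor_le. Qed.

Lemma fr_lt1 x : fr x < 1.
Proof.
rewrite /fr ltrBlDl; have := floor_lt_int (x / tau) (fl x + 1).
by rewrite /fl ltrDl ltr01 => /esym /eqP; rewrite eqb_id intrD.
Qed.

Lemma fr_eq x : x = (fl x)%:~R * tau + fr x * tau.
Proof. rewrite /fr; have := tau_gt0; move=> h; field; lra. Qed.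

Lemma dirichlet (beta : R) (N : nat) :
  exists q : nat, (0 < q <= N.+1)%N /\
    exists m : int, `|q%:R * beta - m%:~R * tau| < tau / N.+1%:R.
Proof.
pose g (j : 'I_N.+2) : nat := Num.Def.trunc (N.+1%:R * fr (j%:R * beta)).
have gN j : (g j < N.+1)%N.
  rewrite /g truncn_lt_nat; last by rewrite mulr_ge0 // fr_ge0.
  by rewrite gtr_pMr ?fr_lt1 // ltr0n.
pose f (j : 'I_N.+2) : 'I_N.+1 := Ordinal (gN j).
have : ~~ injectiveb f.
  apply/negP => /injectiveP /leq_card; rewrite !card_ord; lia.
move/injectivePn => [j1 [j2 hne hf]].
have hg : g j1 = g j2 by move: hf => /(congr1 val).
wlog lt12 : j1 j2 hne hf hg / (j1 < j2)%N.
  move=> W; case: (ltngtP j1 j2) => h; first exact: (W j1 j2 hne hf hg h).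
  - by apply: (W j2 j1) => //; rewrite eq_sym.
  - by move: hne; rewrite (val_inj h) eqxx.
exists (j2 - j1)%N; split; first by have := ltn_ord j2; lia.
exists (fl (j2%:R * beta) - fl (j1%:R * beta)).
set x1 := fr (j1%:R * beta); set x2 := fr (j2%:R * beta).
have [h1l h1r] : ((g j1)%:R <= N.+1%:R * x1 /\ N.+1%:R * x1 < (g j1).+1%:R).
  by apply/andP; apply: truncn_itv; rewrite mulr_ge0 // fr_ge0.
have [h2l h2r] : ((g j2)%:R <= N.+1%:R * x2 /\ N.+1%:R * x2 < (g j2).+1%:R).
  by apply/andP; apply: truncn_itv; rewrite mulr_ge0 // fr_ge0.
rewrite -hg in h2l h2r.
have hd : `|x2 - x1| < 1 / N.+1%:R.
  have hN : (0 : R) < N.+1%:R by rewrite ltr0n.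
  move: h1r h2r; rewrite -[(g j1).+1]addn1 natrD => h1r h2r.
  have k1 : N.+1%:R * (x2 - x1) < 1 by rewrite mulrBr; lra.
  have k2 : - 1 < N.+1%:R * (x2 - x1) by rewrite mulrBr; lra.
  rewrite ltr_norml; apply/andP; split.
  - by rewrite ltrNl ltr_pdivlMr // mulrC mulrN ltrNl.
  - by rewrite ltr_pdivlMr // mulrC.
have E1 := fr_eq (j1%:R * beta); have E2 := fr_eq (j2%:R * beta).
have -> : (j2 - j1)%N%:R * beta - (fl (j2%:R * beta) - fl (j1%:R * beta))%:~R * tau
   = (x2 - x1) * tau.
  rewrite natrB ?(ltnW lt12) // intrB.
  rewrite /x1 /x2 mulrBl {1}E2 {1}E1; ring.
rewrite normrM (gtr0_norm tau_gt0).
have -> : tau / N.+1%:R = 1 / N.+1%:R * tau by rewrite mulrC mul1r.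
by rewrite ltr_pM2r // tau_gt0.
Qed.

Lemma walk_pos (g d : R) : 0 < g -> g < d ->
  forall t : R, exists j : nat, (j <= (Num.Def.trunc (tau / g)).+1)%N /\
    exists m : int, `|t + j%:R * g - m%:~R * tau| < d.
Proof.
move=> g0 gd t.
set s := fr t * tau.
have Et : t = (fl t)%:~R * tau + s by rewrite /s -fr_eq.
have s0 : 0 <= s by rewrite /s mulr_ge0 ?fr_ge0 // ltW // tau_gt0.
have s1 : s < tau by rewrite /s gtr_pMl ?fr_lt1 // tau_gt0.
have x0 : 0 <= (tau - s) / g by rewrite divr_ge0 // ?subr_ge0 ltW.
set j := (Num.Def.trunc ((tau - s) / g)).+1.
exists j; split.
  rewrite ltnS; apply: le_truncn; rewrite ler_pM2r ?invr_gt0 //; lra.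
exists (fl t + 1).
have [jl jr] : ((Num.Def.trunc ((tau - s) / g))%:R <= (tau - s) / g /\
    (tau - s) / g < (Num.Def.trunc ((tau - s) / g)).+1%:R).
  by apply/andP; apply: truncn_itv.
rewrite -/j in jr.
have jl' : (j%:R - 1) * g <= tau - s.
  by rewrite /j -addn1 natrD addrK -ler_pdivlMr.
have jr' : tau - s < j%:R * g by rewrite -ltr_pdivrMr.
have -> : t + j%:R * g - (fl t + 1)%:~R * tau = s + j%:R * g - tau.
  by rewrite {1}Et intrD mulrDl mul1r; ring.
rewrite ger0_norm; last by lra.
move: jl'; rewrite mulrBl mul1r; lra.
Qed.

Lemma walk (g d : R) : 0 < `|g| < d -> exists J : nat,
  forall t : R, exists j : nat, (j <= J)%N /\
    exists m : int, `|t + j%:R * g - m%:~R * tau| < d.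
Proof.
move=> /andP [g0 gd].
case: (ltgtP g 0) => hg; last by move: g0; rewrite hg normr0 ltxx.
- exists (Num.Def.trunc (tau / - g)).+1 => t.
  have gd' : - g < d by rewrite -ltr0_norm.
  have g0n : 0 < - g by rewrite oppr_gt0.
  have [j [hj [m hm]]] := walk_pos g0n gd' (- t).
  exists j; split => //; exists (- m).
  have -> : t + j%:R * g - (- m)%:~R * tau = - (- t + j%:R * - g - m%:~R * tau).
    by rewrite mulrNz; ring.
  by rewrite normrN.
- exists (Num.Def.trunc (tau / g)).+1 => t.
  by apply: walk_pos => //; rewrite -(gtr0_norm hg).
Qed.

Lemma dens (k : nat) (d c : R) : (0 < k)%N -> 0 < d -> exists G : nat,
  forall a : nat, exists j : nat, (a <= k * j < a + G)%N /\
    exists m : int, `|c + (k * j)%N%:R - m%:~R * tau| < d.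
Proof.
move=> k0 d0.
set N := Num.Def.trunc (tau / d).
have [q [/andP [q0 qN] [m0 hm0]]] := dirichlet k%:R N.
have hNd : tau / N.+1%:R < d.
  have h := truncnS_gt (tau / d); rewrite -/N in h.
  have hN : (0 : R) < N.+1%:R by rewrite ltr0n.
  rewrite ltr_pdivrMr //; rewrite ltr_pdivrMr // in h; by rewrite mulrC.
set g := q%:R * k%:R - m0%:~R * tau.
have gpos : 0 < `|g| < d.
  apply/andP; split; last exact: lt_trans hm0 hNd.
  rewrite normr_gt0 subr_eq0 -natrM; by apply: irr; rewrite muln_gt0 q0 k0.
have [J HJ] := walk gpos.
exists (k + k * q * J + 1)%N => a.
set A := (a %/ k + 1)%N.
have [j [hj [m hm]]] := HJ (c + (k * A)%N%:R).
exists (A + j * q)%N; split.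
- have h1 : (a < k * A)%N by rewrite /A mulnC addn1 ltn_ceil.
  have h2 : (k * A <= a + k)%N.
    rewrite /A mulnDr muln1 leq_add2r mulnC; exact: leq_trunc_div.
  have h3 : (k * q * j <= k * q * J)%N by rewrite leq_mul2l hj orbT.
  apply/andP; split; first by rewrite mulnDr; lia.
  rewrite mulnDr; lia.
- exists (m + (j%:Z * m0))%R.
  suff -> : c + (k * (A + j * q))%N%:R - (m + j%:Z * m0)%:~R * tau
    = c + (k * A)%N%:R + j%:R * g - m%:~R * tau by [].
  rewrite /g intrD intrM -[(Posz j)%:~R]/(j%:R : R) !(natrD, natrM); ring.
Qed.
Local Open Scope classical_set_scope.
Lemma prod_cont {Y : topologicalType} {I : eqType} {K : I -> topologicalType}
  (f : Y -> prod_topology K) : (forall i, continuous (fun y => f y i)) -> continuous f.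
Proof.
move=> H y; apply/cvg_sup => i.
have := @continuous_comp_initial _ Y (K i) (fun g : prod_topology K => g i)
  (f : Y -> initial_topology (fun g : prod_topology K => g i)) (H i).
by move/(_ y).
Qed.

Section Cyl.
Context {K : nat -> topologicalType} (p : prod_topology K).

Definition coordnb (i : nat) (V : set (prod_topology K)) :=
  exists C : set (K i), nbhs (p i) C /\ forall q : prod_topology K, C (q i) -> V q.

Definition cylF : set_system (prod_topology K) := fun S =>
  exists L (V : nat -> set (prod_topology K)), (forall i, (i < L)%N -> coordnb i (V i)) /\
    (forall q, (forall i, (i < L)%N -> V i q) -> S q).

Instance cylF_filter : Filter cylF.
Proof.
constructor.
- by exists 0%N, (fun _ => setT); split.
- move=> S1 S2 [L1 [V1 [h1 s1]]] [L2 [V2 [h2 s2]]].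
  exists (maxn L1 L2), (fun i q => ((i < L1)%N -> V1 i q) /\ ((i < L2)%N -> V2 i q)); split.
  + move=> i _.
    have [C1 [n1 c1]] : exists C : set (K i), nbhs (p i) C /\
        forall q : prod_topology K, C (q i) -> (i < L1)%N -> V1 i q.
      case: (ltnP i L1) => hi; last by exists setT; split; [exact: filterT | move=> q _; lia].
      by have [C [nC cC]] := h1 i hi; exists C; split => // q /cC.
    have [C2 [n2 c2]] : exists C : set (K i), nbhs (p i) C /\
        forall q : prod_topology K, C (q i) -> (i < L2)%N -> V2 i q.
      case: (ltnP i L2) => hi; last by exists setT; split; [exact: filterT | move=> q _; lia].
      by have [C [nC cC]] := h2 i hi; exists C; split => // q /cC.
    exists (C1 `&` C2); split; first exact: filterI.
    by move=> q [/c1 a /c2 b].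
  + move=> q hq; split; [apply: s1 | apply: s2] => i hi.
    * by apply: (proj1 (hq i _)) => //; rewrite leq_max hi.
    * by apply: (proj2 (hq i _)) => //; rewrite leq_max hi orbT.
- move=> S1 S2 S12 [L [V [h s]]]; exists L, V; split => // q /s; exact: S12.
Qed.

Lemma cylF_cvg : cylF --> p.
Proof.
apply/cvg_sup => i A.
rewrite nbhsE => -[B [[C oC <-] Cp] BA].
exists i.+1, (fun j q => if j == i then C (q i) else True); split.
- move=> j _; case: eqP => [->|_]; last by exists setT; split => //; exact: filterT.
  by exists C; split => //; apply: open_nbhs_nbhs.
- by move=> q /(_ i (ltnSn i)); rewrite eqxx => /BA.
Qed.

Lemma prod_cyl (N : set (prod_topology K)) : nbhs p N ->
  exists L (V : nat -> set (prod_topology K)), (forall i, (i < L)%N -> coordnb i (V i)) /\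
    (forall q, (forall i, (i < L)%N -> V i q) -> N q).
Proof. by move=> /cylF_cvg. Qed.
End Cyl.
Lemma pair_cont {T : topologicalType} (f g : T -> R) :
  continuous f -> continuous g -> continuous (fun x => (f x, g x)).
Proof.
move=> cf cg x.
have := @cvg_pair _ _ _ (nbhs x) (nbhs (f x)) (nbhs (g x)) _ _ _ f g (cf x) (cg x).
exact.
Qed.
Lemma fst_c : continuous (fun v : (R * R)%type => v.1).
Proof. move=> v. exact: cvg_fst. Qed.
Lemma snd_c : continuous (fun v : (R * R)%type => v.2).
Proof. move=> v. exact: cvg_snd. Qed.
Definition rho (v : R * R) : R * R := (v.1 * cos 1 - v.2 * sin 1, v.1 * sin 1 + v.2 * cos 1).
Lemma rho_c : continuous rho.
Proof.
have m1 (c : R) : continuous (fun v : R * R => v.1 * c).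
  move=> v; have := @continuousM _ _ (fun v : R * R => v.1) (fun _ => c) v (@fst_c v) (@cst_continuous _ _ c v); exact.
have m2 (c : R) : continuous (fun v : R * R => v.2 * c).
  move=> v; have := @continuousM _ _ (fun v : R * R => v.2) (fun _ => c) v (@snd_c v) (@cst_continuous _ _ c v); exact.
apply: pair_cont => v.
- have := @cvgB R R^o _ (nbhs v) _ (fun v : R * R => v.1 * cos 1) (fun v : R * R => v.2 * sin 1) _ _ (m1 _ v) (m2 _ v); exact.
- have := @cvgD R R^o _ (nbhs v) _ (fun v : R * R => v.1 * sin 1) (fun v : R * R => v.2 * cos 1) _ _ (m1 _ v) (m2 _ v); exact.
Qed.

Lemma haus_maps {T : topologicalType} {I : Type} {U : I -> topologicalType}
  (f : forall i, T -> U i) : (forall i, continuous (f i)) ->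
  (forall i, hausdorff_space (U i)) ->
  (forall x y, (forall i, f i x = f i y) -> x = y) -> hausdorff_space T.
Proof.
move=> fc hU inj p q cl; apply: inj => i; apply: hU => A B hA hB.
have [x [xa xb]] := cl _ _ (fc i p _ hA) (fc i q _ hB).
by exists (f i x).
Qed.

Section SetType.
Context {T : topologicalType} (A : set T).

Lemma st_nbhs (a : set_type A) (V : set (set_type A)) : nbhs a V ->
  exists C : set T, [/\ open C, C (val a) & forall b : set_type A, C (val b) -> V b].
Proof.
rewrite nbhsE => -[B [[C oC <-] Ca] BV].
by exists C; split => // b Cb; apply: BV.
Qed.

Lemma st_open (C : set T) : open C -> open (set_val @^-1` C : set (set_type A)).
Proof. by move=> oC; exists C. Qed.

Lemma st_open_inv (U : set (set_type A)) : open U ->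
  exists C : set T, open C /\ U = set_val @^-1` C.
Proof. by move=> [C oC <-]; exists C. Qed.

Lemma st_val_cont : continuous (set_val : set_type A -> T).
Proof. exact: initial_continuous. Qed.

Lemma st_haus : hausdorff_space T -> hausdorff_space (set_type A).
Proof.
move=> hT; apply: (@haus_maps _ unit (fun _ => T) (fun _ => set_val)) => //.
- by move=> _; exact: st_val_cont.
- by move=> x y /(_ tt) /val_inj.
Qed.

Lemma st_compact : compact A -> compact [set: set_type A].
Proof.
move=> cA F PF _.
have FA : (set_val @ F) A.
  by apply: (@filterS _ F _ setT); [move=> x _; exact: set_valP | exact: filterT].
have [p [Ap clp]] := cA (set_val @ F) (fmap_proper_filter _ PF) FA.
exists (SigSub (mem_set Ap)); split => // U V FU nV.
have [C [oC Cp CV]] := st_nbhs nV.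
have FU' : (set_val @ F) (set_val @` U).
  by apply: (@filterS _ F _ U) => // x Ux; exists x.
have [y [[u Uu <-] Cu]] := clp _ _ FU' (open_nbhs_nbhs (conj oC Cp)).
by exists u; split => //; apply: CV.
Qed.

Lemma st_cont_into {Y : topologicalType} (g : Y -> set_type A) :
  continuous (set_val \o g) -> continuous g.
Proof. exact: (@continuous_comp_initial _ Y T set_val g). Qed.
End SetType.

Definition P := prod_topology (fun _ : nat => (R * R)%type).

Definition e (t : R) : R * R := (cos t, sin t).

Lemma e_c : continuous e.
Proof.
move=> t.
have := @cvg_pair _ _ _ (nbhs t) (nbhs (cos t)) (nbhs (sin t)) _ _ _ cos sin (@continuous_cos R t) (@continuous_sin R t).
exact.
Qed.

Definition pp (t : R) (z : nat -> bool) : P := fun n => if z n then e t else (0, 0).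

Definition Aset : set P := [set p | exists t z, Zs z /\ p = pp t z].

Definition X := set_type Aset.

Definition Tp (p : P) : P := fun n => rho (p n.+1).

Definition shiftz (z : nat -> bool) (k : nat) : nat -> bool := fun t => z (t + k)%N.

Lemma rho_e t : rho (e t) = e (t + 1).
Proof. by rewrite /rho /e /= trigo.cosD trigo.sinD; congr pair; ring. Qed.

Lemma rho_0 : rho (0, 0) = (0, 0).
Proof. by rewrite /rho /=; congr pair; ring. Qed.

Lemma Tp_pp t z : Tp (pp t z) = pp (t + 1) (shiftz z 1).
Proof.
apply: boolp.funext => n; rewrite /Tp /pp /shiftz addn1.
by case: (z n.+1); [exact: rho_e | exact: rho_0].
Qed.

Lemma iter_Tp n t z : iter n Tp (pp t z) = pp (t + n%:R) (shiftz z n).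
Proof.
elim: n => [|n IH].
  rewrite /= addr0; congr pp; apply: boolp.funext => i; by rewrite /shiftz addn0.
rewrite iterS IH Tp_pp -addrA -natr1; congr pp.
by apply: boolp.funext => i; rewrite /shiftz addn1 addnS.
Qed.

Lemma cos_nat t (k : nat) : cos (t + k%:R * tau) = cos t /\ sin (t + k%:R * tau) = sin t.
Proof.
elim: k => [|k [IH1 IH2]]; first by rewrite mul0r addr0.
have -> : t + k.+1%:R * tau = (t + k%:R * tau) + pi *+ 2.
  by rewrite -natr1 mulrDl mul1r addrA /tau mulr2n; ring.
by rewrite cosD2pi sinD2pi.
Qed.

Lemma e_per t (m : int) : e (t + m%:~R * tau) = e t.
Proof.
rewrite /e; case: m => k.
- by have [-> ->] := cos_nat t k.
- have [h1 h2] := cos_nat (t + (Negz k)%:~R * tau) k.+1.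
  have E : t + (Negz k)%:~R * tau + k.+1%:R * tau = t.
    by rewrite NegzE intrN -[(Posz k.+1)%:~R]/(k.+1%:R : R); ring.
  by rewrite E in h1 h2; rewrite h1 h2.
Qed.

Lemma pp_per t m z : pp (t + m%:~R * tau) z = pp t z.
Proof. by apply: boolp.funext => n; rewrite /pp e_per. Qed.

Lemma e_neq0 t : e t != (0, 0).
Proof.
apply/negP => /eqP [c s]; have := cos2Dsin2 t; rewrite c s; lra.
Qed.

Lemma pp_inj t t' z z' : pp t z = pp t' z' -> z = z'.
Proof.
move=> E; apply: boolp.funext => n; have := congr1 (fun p : P => p n) E.
rewrite /pp; case: (z n); case: (z' n) => // h.
- by move: (e_neq0 t); rewrite h eqxx.
- by move: (e_neq0 t'); rewrite -h eqxx.
Qed.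

Lemma in_A t z : Zs z -> Aset (pp t z).
Proof. by move=> hz; exists t, z. Qed.

Definition mkX t z (hz : Zs z) : X := SigSub (mem_set (in_A t hz)).

Lemma val_mkX t z (hz : Zs z) : val (mkX t hz) = pp t z.
Proof. by []. Qed.

Lemma TA (x : X) : Aset (Tp (val x)).
Proof.
have [t [z [hz ->]]] := set_valP x.
by rewrite Tp_pp; apply: in_A; apply: Zs_shift.
Qed.

Definition T (x : X) : X := SigSub (mem_set (TA x)).

Lemma val_T x : val (T x) = Tp (val x).
Proof. by []. Qed.

Lemma val_iterT n x : val (iter n T x) = iter n Tp (val x).
Proof. by elim: n => [|n IH] //; rewrite !iterS val_T IH. Qed.

Lemma Xpt (x : X) : exists t z, Zs z /\ val x = pp t z.
Proof. by have [t [z [hz h]]] := set_valP x; exists t, z. Qed.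

Lemma val_iterT_pp n (x : X) t z : val x = pp t z ->
  val (iter n T x) = pp (t + n%:R) (shiftz z n).
Proof. by move=> h; rewrite val_iterT h iter_Tp. Qed.

Lemma ppi_cont z i : continuous (fun t => pp t z i).
Proof. rewrite /pp; case: (z i); [exact: e_c | exact: cst_continuous]. Qed.

Lemma ballR (x y d : R) : `|x - y| < d -> ball x d y.
Proof. by []. Qed.

Lemma box (C : set P) t1 z1 : open C -> C (pp t1 z1) ->
  exists (L : nat) (d : R), 0 < d /\ forall t z, `|t1 - t| < d ->
    (forall i, (i < L)%N -> z i = z1 i) -> C (pp t z).
Proof.
move=> oC Cp.
have nC : nbhs (pp t1 z1) C by apply: open_nbhs_nbhs.
have [L [V [hV sV]]] := prod_cyl nC.
have key : forall L', (L' <= L)%N -> nbhs t1 [set t | forall i, (i < L')%N ->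
    exists Ci : set (R * R), (forall q : P, Ci (q i) -> V i q) /\ Ci (pp t z1 i)].
  elim => [|L' IH] hL.
    by apply: (@filterS _ (nbhs t1) _ setT); [move=> t _ i | exact: filterT].
  have [Ci [nCi cCi]] := hV L' hL.
  have nb : nbhs t1 [set t | Ci (pp t z1 L')] by have := @ppi_cont z1 L' t1 Ci nCi.
  apply: filterS (filterI (IH (ltnW hL)) nb) => t [h1 h2] i hi.
  case: (ltnP i L') => hi'; first exact: h1.
  have -> : i = L' by lia.
  by exists Ci.
have /nbhs_ballP [d /= d0 hd] := key L (leqnn L).
exists L, d; split => // t z ht hz; apply: sV => i hi.
have [Ci [cCi Cit]] := hd t (ballR ht) i hi.
by apply: cCi; rewrite /pp hz.
Qed.

Lemma opene_box (U : set X) : opene U -> exists t1 z1 (L : nat) (d : R),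
  [/\ Zs z1, 0 < d & forall (y : X) t z, val y = pp t z -> `|t1 - t| < d ->
    (forall i, (i < L)%N -> z i = z1 i) -> U y].
Proof.
move=> [oU [x Ux]].
have [C [oC UC]] := st_open_inv oU.
have [t1 [z1 [hz1 ex]]] := Xpt x.
have Cx : C (pp t1 z1) by rewrite -ex; move: Ux; rewrite UC.
have [L [d [d0 H]]] := box oC Cx.
exists t1, z1, L, d; split => // y t z ey ht hz.
by rewrite UC; have := H t z ht hz; rewrite -ey.
Qed.

Lemma hit (U V : set X) : opene U -> opene V -> exists (L : nat) (d t12 : R),
  0 < d /\ forall n : nat, (5 * L <= n)%N ->
    (exists m : int, `|t12 + n%:R - m%:~R * tau| < d) ->
    exists x, U x /\ V (iter n T x).
Proof.
move=> oU oV.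
have [t1 [z1 [L1 [d1 [hz1 d10 H1]]]]] := opene_box oU.
have [t2 [z2 [L2 [d2 [hz2 d20 H2]]]]] := opene_box oV.
exists (maxn L1 L2), (Num.min d1 d2), (t1 - t2); split; first by rewrite lt_min d10 d20.
move=> n hn [m hm].
have hz := Zs_glue hz1 hz2 hn.
exists (mkX t1 hz); split.
- apply: (H1 _ t1 (glue z1 (maxn L1 L2) n z2)) => //; first by rewrite subrr normr0.
  by move=> i hi; rewrite glue_l // leq_max hi.
- apply: (H2 _ (t1 + n%:R - m%:~R * tau) (shiftz (glue z1 (maxn L1 L2) n z2) n)).
  + rewrite (val_iterT_pp n (val_mkX t1 hz)).
    by rewrite -[in RHS](pp_per _ m) subrK.
  + have -> : t2 - (t1 + n%:R - m%:~R * tau) = - (t1 - t2 + n%:R - m%:~R * tau) by ring.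
    by rewrite normrN; apply: (lt_le_trans hm); rewrite ge_min lexx orbT.
  + move=> i hi; rewrite /shiftz glue_r //; last by rewrite leq_max hi orbT.
    lia.
Qed.

Lemma box0 (C : set P) : open C -> C (pp 0 (fun _ => false)) ->
  exists L : nat, forall t z, (forall i, (i < L)%N -> z i = false) -> C (pp t z).
Proof.
move=> oC Cp.
have nC : nbhs (pp 0 (fun _ => false)) C by apply: open_nbhs_nbhs.
have [L [V [hV sV]]] := prod_cyl nC.
exists L => t z hz; apply: sV => i hi.
have [Ci [nCi cCi]] := hV i hi; apply: cCi.
have -> : pp t z i = pp 0 (fun _ => false) i by rewrite /pp hz.
exact: nbhs_singleton.
Qed.

Lemma TT : totally_transitive T.
Proof.
move=> k k0 U V oU oV.
have [L [d [t12 [d0 H]]]] := hit oU oV.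
have [G HG] := @dens k d t12 k0 d0.
have [j [/andP [hj1 hj2] hm]] := HG (5 * L)%N.
have [x [Ux Vx]] := H (k * j)%N hj1 hm.
exists j, x; split => //.
by rewrite /preimage /= -iterM mulnC.
Qed.

Definition apex : X := mkX 0 Zs_false.

Lemma TC : transitive_compact T.
Proof.
move=> x; exists apex => F [U [V [oU oV sF]]] W nW.
have [C [oC C0 CW]] := st_nbhs nW.
have [L0 H0] := box0 oC C0.
have [L [d [t12 [d0 H]]]] := hit oU oV.
have [G HG] := @dens 1 d t12 (ltn0Sn 0) d0.
have [t [z [hz ex]]] := Xpt x.
have [s [hs1 hs2]] := Zs_zeroblock (L0 + G) (5 * L) hz.
have [j [/andP [hj1 hj2] hm]] := HG s.
have [x' [Ux' Vx']] := H (1 * j)%N (leq_trans hs1 hj1) hm.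
have Fj : F (1 * j)%N by apply: sF; exists x'.
exists (iter (1 * j) T x); split; first by exists (1 * j)%N.
apply: CW; rewrite (val_iterT_pp _ ex); apply: H0 => i hi.
rewrite /shiftz.
have -> : (i + 1 * j = s + (1 * j - s + i))%N by lia.
apply: hs2; lia.
Qed.
Lemma alg0 (c1 c2 s1 s2 : Rdefinitions.R) : c1 ^+ 2 + s1 ^+ 2 = 1 -> c2 ^+ 2 + s2 ^+ 2 = 1 ->
  9/10 < c1 -> 9/10 < c2 -> 0 < c1 * c2 + s1 * s2.
Proof.
move=> h1 h2 h3 h4.
have k1 : 0 <= (s1 + s2) ^+ 2 by rewrite sqr_ge0.
have k2 : 0 < (c1 - 9/10) * (c2 - 9/10) by rewrite mulr_gt0 // subr_gt0.
have k3 : 0 < (c1 - 9/10) * (c1 + 9/10) by rewrite mulr_gt0 // ?subr_gt0 //; lra.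
have k4 : 0 < (c2 - 9/10) * (c2 + 9/10) by rewrite mulr_gt0 // ?subr_gt0 //; lra.
rewrite expr2 in k1 h1 h2; nra.
Qed.
Lemma alg2 (c1 c2 s1 s2 : Rdefinitions.R) : c1 ^+ 2 + s1 ^+ 2 = 1 -> c2 ^+ 2 + s2 ^+ 2 = 1 ->
  9/10 < c1 -> c2 < - (9/10) -> c1 * c2 + s1 * s2 < 0.
Proof.
move=> h1 h2 h3 h4.
have := @alg0 c1 (- c2) s1 (- s2) h1; rewrite !sqrrN => /(_ h2 h3); lra.
Qed.

Lemma coord_cont (i : nat) : continuous (fun p : P => p i).
Proof. exact: proj_continuous. Qed.

Lemma f0_cont : continuous (fun p : P => (p 0%N).1).
Proof.
move=> p; apply: (@continuous_comp _ _ _ (fun q : P => q 0%N) (fun v : R * R => v.1)).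
- exact: coord_cont.
- exact: fst_c.
Qed.

Lemma openX' {T1 T2 : topologicalType} (A : set T1) (B : set T2) :
  open A -> open B -> open (A `*` B).
Proof.
move=> oA oB.
have -> : A `*` B = (fst @^-1` A) `&` (snd @^-1` B) by [].
apply: openI; apply: open_comp => // + _ => x.
- exact: cvg_fst.
- exact: cvg_snd.
Qed.

Lemma iter_pair (n : nat) (a b : X) :
  iter n (fun p : X * X => (T p.1, T p.2)) (a, b) = (iter n T a, iter n T b).
Proof. by elim: n => [|n IH] //; rewrite !iterS IH. Qed.

Definition U0 : set X := set_val @^-1` [set p : P | 9/10 < (p 0%N).1].
Definition V0 : set X := set_val @^-1` [set p : P | (p 0%N).1 < - (9/10)].

Lemma U0_open : open U0.
Proof.
apply: st_open; apply: (@open_comp _ _ (fun p : P => (p 0%N).1) [set x : R | 9/10 < x]); last exact: open_gt.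
by move=> p _; exact: f0_cont.
Qed.

Lemma V0_open : open V0.
Proof.
apply: st_open; apply: (@open_comp _ _ (fun p : P => (p 0%N).1) [set x : R | x < - (9/10)]); last exact: open_lt.
by move=> p _; exact: f0_cont.
Qed.

Lemma U0_ne : U0 !=set0.
Proof.
exists (mkX 0 Zs_e1); rewrite /U0 /preimage /= /pp /e1 /= /e /= cos0; lra.
Qed.

Lemma V0_ne : V0 !=set0.
Proof.
exists (mkX pi Zs_e1); rewrite /V0 /preimage /= /pp /e1 /= /e /= cospi; lra.
Qed.

Lemma cos_of_gt (y : X) t z : val y = pp t z -> 9/10 < ((val y) 0%N).1 -> 9/10 < cos t.
Proof. by move=> ->; rewrite /pp; case: (z 0%N) => //= h; lra. Qed.

Lemma cos_of_lt (y : X) t z : val y = pp t z -> ((val y) 0%N).1 < - (9/10) -> cos t < - (9/10).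
Proof. by move=> ->; rewrite /pp; case: (z 0%N) => //= h; lra. Qed.

Lemma not_WM : ~ weakly_mixing T.
Proof.
move=> WM.
have oUU : opene (U0 `*` U0).
  split; first exact: openX' U0_open U0_open.
  by have [a Ua] := U0_ne; exists (a, a).
have oUV : opene (U0 `*` V0).
  split; first exact: openX' U0_open V0_open.
  by have [a Ua] := U0_ne; have [b Vb] := V0_ne; exists (a, b).
have [n [[a b] [[Ua Ub] /=]]] := WM _ _ oUU oUV.
rewrite /preimage /= iter_pair => -[Ua' Vb'].
have [t [z [hz ea]]] := Xpt a; have [t' [z' [hz' eb]]] := Xpt b.
have ea' := val_iterT_pp n ea; have eb' := val_iterT_pp n eb.
have c1 := cos_of_gt ea Ua; have c2 := cos_of_gt ea' Ua'.
have c3 := cos_of_gt eb Ub; have c4 := cos_of_lt eb' Vb'.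
have h1 : 0 < cos ((t + n%:R) - t).
  by rewrite trigo.cosB; apply: alg0 => //; exact: cos2Dsin2.
have h2 : cos ((t' + n%:R) - t') < 0.
  rewrite trigo.cosB mulrC [X in _ + X]mulrC; apply: alg2 => //; exact: cos2Dsin2.
move: h1 h2; rewrite [t + _ - t]addrAC [t' + _ - t']addrAC !subrr !add0r; lra.
Qed.

Lemma coordK {K : nat -> topologicalType} (i : nat) :
  continuous (fun p : prod_topology K => p i).
Proof. exact: proj_continuous. Qed.

Lemma cantor_cyl (z : cantor_space) (L : nat) :
  nbhs z [set z' : cantor_space | forall t, (t < L)%N -> z' t = z t].
Proof.
elim: L => [|L IH].
  by apply: (@filterS _ (nbhs z) _ setT); [move=> z' _ t | exact: filterT].
have h : nbhs z [set z' : cantor_space | z' L = z L].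
  by have := @coordK (fun _ => bool) L z [set z L] (discrete_set1 (z L)).
apply: filterS (filterI IH h) => z' [h1 h2] t ht.
case: (ltnP t L) => h3; first exact: h1.
by have -> : t = L by lia.
Qed.

Definition Zset : set cantor_space := [set z | Zs z].

Lemma Zset_closed : closed Zset.
Proof.
move=> z clz i m.
have [z' [Zz' ag]] := clz _ (cantor_cyl z (i + m)).
suff -> : cnt z i m = cnt z' i m by exact: Zz'.
rewrite /cnt; apply: eq_big_nat => t /andP [_ ht]; by rewrite ag.
Qed.

Lemma Zset_compact : compact Zset.
Proof. exact: subclosed_compact Zset_closed cantor_space_compact (subsetT _). Qed.

Definition ppu (w : (R * cantor_space)%type) : P := pp w.1 w.2.

Lemma ppu_cont : continuous ppu.
Proof.
apply: prod_cont => n w N nN.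
have hb : nbhs w [set w' : (R * cantor_space)%type | w'.2 n = w.2 n].
  have h1 : nbhs w.2 [set z' : cantor_space | z' n = w.2 n].
    by have := @coordK (fun _ => bool) n w.2 [set w.2 n] (discrete_set1 (w.2 n)).
  exact: (@cvg_snd _ _ (nbhs w.1) (nbhs w.2) _ _ h1).
move: nN; rewrite /ppu /pp; case E: (w.2 n) => nN.
- have he : nbhs w [set w' : (R * cantor_space)%type | N (e w'.1)].
    exact: (@continuous_comp _ _ _ (fun w' : (R * cantor_space)%type => w'.1) e w
      (@cvg_fst _ _ (nbhs w.1) (nbhs w.2) _) (@e_c w.1) N nN).
  apply: filterS (filterI hb he) => w' [h1 h2].
  by rewrite /ppu /pp /= h1 E.
- apply: filterS hb => w' h1.
  by rewrite /ppu /pp /= h1 E; exact: nbhs_singleton nN.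
Qed.

Lemma Aset_eq : Aset = ppu @` (`[0, tau] `*` Zset).
Proof.
apply/seteqP; split.
- move=> p [t [z [hz ->]]].
  exists (fr t * tau, z); last first.
    by rewrite /ppu /= -(pp_per _ (fl t)) addrC -fr_eq.
  split => //=; rewrite in_itv /=; apply/andP; split.
  + by rewrite mulr_ge0 ?fr_ge0 // ltW // tau_gt0.
  + by rewrite ler_piMl ?ltW ?fr_lt1 // tau_gt0.
- by move=> p [[t z] [_ hz] <-]; exists t, z.
Qed.

Lemma Aset_compact : compact Aset.
Proof.
rewrite Aset_eq; apply: continuous_compact.
- by apply: continuous_subspaceT; exact: ppu_cont.
- exact: compact_setX (@segment_compact R 0 tau) Zset_compact.
Qed.

Lemma X_compact : compact [set: X].
Proof. exact: st_compact Aset_compact. Qed.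

Lemma hausRR : hausdorff_space (R * R)%type.
Proof.
apply: (@haus_maps _ bool (fun _ => R) (fun b => if b then (fun v : R * R => v.1) else (fun v : R * R => v.2))).
- by case; [exact: fst_c | exact: snd_c].
- by move=> _; exact: Rhausdorff.
- by move=> [a b] [c d] h; have /= -> := h true; have /= -> := h false.
Qed.

Lemma X_haus : hausdorff_space X.
Proof. apply: st_haus; apply: hausdorff_product => _; exact: hausRR. Qed.

Lemma X_two : exists x y : X, x <> y.
Proof.
exists apex, (mkX 0 Zs_e1) => h.
have h' : pp 0 (fun _ => false) = pp 0 e1 by exact: (congr1 val h).
by move: (pp_inj h') => /(congr1 (fun f => f 0%N)).
Qed.

Lemma X_noiso (x : X) : ~ open [set x].
Proof.
move=> /st_open_inv [C [oC E]].
have [t [z [hz ex]]] := Xpt x.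
have Cx : C (pp t z) by rewrite -ex; have : [set x] x by []; rewrite E.
have [L [d [d0 H]]] := box oC Cx.
set L' := L.+1; set n := (5 * L')%N.
have hn : (5 * L' <= n)%N by [].
have ha := Zs_glue hz Zs_false hn; have hb := Zs_glue hz Zs_e1 hn.
have key : forall z' (hz' : Zs z'), (forall i, (i < L)%N -> z' i = z i) -> z' = z.
  move=> z' hz' ag.
  have : [set x] (mkX t hz').
    rewrite E; have := H t z' _ ag; rewrite subrr normr0 => /(_ d0); exact.
  move=> /= h; have h' : pp t z' = pp t z by rewrite -ex; exact: (congr1 val h).
  exact: pp_inj h'.
have ea := key _ ha (fun i hi => glue_l _ _ _ (ltn_trans hi (ltnSn L))).
have eb := key _ hb (fun i hi => glue_l _ _ _ (ltn_trans hi (ltnSn L))).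
have := congr1 (fun f => f (0 + n)%N) ea; have := congr1 (fun f => f (0 + n)%N) eb.
rewrite /= !glue_r; try (rewrite /n /L'; lia).
by move=> <-.
Qed.

Lemma Tp_cont : continuous Tp.
Proof.
apply: prod_cont => n p.
exact: (@continuous_comp _ _ _ (fun q : P => q n.+1) rho p (@coordK _ n.+1 p) (@rho_c _)).
Qed.

Lemma T_cont : continuous T.
Proof.
apply: st_cont_into => x.
exact: (@continuous_comp _ _ _ set_val Tp x (@st_val_cont _ Aset x) (@Tp_cont _)).
Qed.

Lemma T_surj (y : X) : exists x, T x = y.
Proof.
have [t [z [hz ey]]] := Xpt y.
exists (mkX (t - 1) (Zs_cons0 hz)); apply: val_inj.
rewrite val_T val_mkX Tp_pp ey subrK; congr pp.
exact: shift_cons0.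
Qed.

Theorem theorem6p1 :
  exists (X : pseudoMetricType Rdefinitions.R) (T : X -> X),
    [/\ dynamical_system T, totally_transitive T, transitive_compact T
      & ~ weakly_mixing T].
Proof.
exists X, T; split.
- split; [exact: X_compact | exact: X_haus | exact: X_two | exact: X_noiso |].
  by split; [exact: T_cont | exact: T_surj].
- exact: TT.
- exact: TC.
- exact: not_WM.
Qed.
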